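(* Let $N\in\mathbb{N}$, $m\in\mathrm{Ran}[m_N]\setminus\{-1,1\}$, $\mu\in\mathbb{R}$ and $\eta>0$. There is a cutoff $N(m,\eta)\in\mathbb{N}$ such that for $N\ge N(m,\eta)$, \[ \left(\tfrac12-\eta\right)\frac{\ln(N+1)}{N}\le\frac{\mathcal{H}(\mu_{\mathrm{MC}}^{m;N}\,\|\,\mu_{\mathrm{C}}^{\mu;N})}{N}-F(m,\mu)\le\frac{\ln(N+1)}{N}, \] where $F(m,\mu)=\ln2+\ln\cosh\mu+\mu m+\frac{1+m}2\ln\frac{1+m}2+\frac{1-m}2\ln\frac{1-m}2$. Moreover, every pair $(m,\mu)\in(\mathrm{Ran}[m_N]\setminus\{-1,1\})\times\mathbb{R}$ with $m=-\tanh\mu$ satisfies $F(m,\mu)=0$, and there are no other solutions of $F(m,\mu)=0$ among such pairs.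
   Context: $\Lambda$ is a finite lattice with $N=|\Lambda|$ sites, $\mathcal{S}=\{-1,1\}^\Lambda$, magnetization $M[\phi]=\sum_{x\in\Lambda}\phi(x)$, and $m_N[\phi]=M[\phi]/N$; $\mathrm{Ran}[m_N]$ is its range. For $m\in\mathrm{Ran}[m_N]$, $\mathcal{S}_m=\{\phi: m_N[\phi]=m\}$ and $\mu_{\mathrm{MC}}^{m;N}$ is the uniform probability measure on $\mathcal{S}_m$. For $\mu\in\mathbb{R}$, $\mu_{\mathrm{C}}^{\mu;N}$ is the probability measure on $\mathcal{S}$ with weights proportional to $e^{-\mu M[\phi]}$. The relative entropy is $\mathcal{H}(\lambda_1\|\lambda_2)=\int d\lambda_1\ln\frac{d\lambda_1}{d\lambda_2}$ if $\lambda_1\ll\lambda_2$ and $+\infty$ otherwise. *)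

(* Defs.v *)
From HB Require Import structures.
From mathcomp Require Import all_boot all_order all_algebra.
From mathcomp Require Import reals ereal sequences exp.
Unset Printing Implicit Defensive.
Import Order.TTheory GRing.Theory Num.Theory.
Local Open Scope ring_scope.

Definition cosh {R : realType} (x : R) : R := (expR x + expR (- x)) / 2.
Definition sinh {R : realType} (x : R) : R := (expR x - expR (- x)) / 2.
Definition tanh {R : realType} (x : R) : R := sinh x / cosh x.

(* Spin values: a configuration phi : Lambda -> {-1,1} is encoded as
   phi : {ffun L -> bool}, with true |-> 1 and false |-> -1. *)
Definition spin {R : realType} (b : bool) : R := if b then 1 else -1.

Definition config (L : finType) := {ffun L -> bool}.

Definition magn {R : realType} (L : finType) (phi : config L) : R :=
  \sum_(x : L) spin (phi x).

Definition mN {R : realType} (L : finType) (phi : config L) : R :=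
  magn L phi / #|L|%:R.

Definition inRan {R : realType} (L : finType) (m : R) : Prop :=
  exists phi : config L, mN L phi = m.

Definition muMC {R : realType} (L : finType) (m : R) (phi : config L) : R :=
  if mN L phi == m then (#|[set psi : config L | mN L psi == m]|%:R)^-1 else 0.

Definition muC {R : realType} (L : finType) (mu : R) (phi : config L) : R :=
  expR (- mu * magn L phi) / \sum_(psi : config L) expR (- mu * magn L psi).

(* relative entropy of probability (mass functions) on a finite type:
   int dl1 ln(dl1/dl2) if l1 << l2, +oo otherwise (convention 0 ln 0 = 0) *)
Definition relent {R : realType} (T : finType) (p q : T -> R) : \bar R :=
  if [forall x, (q x == 0) ==> (p x == 0)]
  then (\sum_(x : T | p x != 0) p x * ln (p x / q x))%:E
  else +oo%E.

Definition Fmmu {R : realType} (m mu : R) : R :=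
  ln 2 + ln (cosh mu) + mu * m
  + (1 + m) / 2 * ln ((1 + m) / 2) + (1 - m) / 2 * ln ((1 - m) / 2).

(* Main.v *)
Require Import Defs.
From HB Require Import structures.
From mathcomp Require Import all_boot all_order all_algebra.
From mathcomp Require Import reals ereal sequences exp.
From mathcomp Require Import boolp classical_sets topology normedtype derive realfun.
From mathcomp Require Import ring lra.
Import Order.TTheory GRing.Theory Num.Theory.
Import numFieldNormedType.Exports.
Local Open Scope ring_scope.

Section S.
Variable R : realType.

Lemma mono_deriv (h dh : R -> R) (a b : R) : 0 < a -> a <= b ->
  (forall z : R, 0 < z -> is_derive z 1 h (dh z)) ->
  (forall z : R, a < z < b -> 0 <= dh z) -> h a <= h b.
Proof.
move=> a0 ab hd hpos.
have hz : forall z, a <= z -> 0 < z by move=> z az; exact: lt_le_trans az.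
apply: (@ger0_derive1_ndecr R h a b) => //.
- move=> z; rewrite in_itv /= => /andP[az _].
  have := hd z (hz z (ltW az)) => H; exact: ex_derive.
- move=> z; rewrite in_itv /= => zab.
  have := hd z (hz z (ltW (proj1 (andP zab)))) => H.
  by rewrite derive1E derive_val; apply: hpos.
- apply: continuous_in_subspaceT => z; rewrite inE /= in_itv /= => /andP[az _].
  have := hd z (hz z az) => H.
  apply: differentiable_continuous; apply/derivable1_diffP; exact: ex_derive.
Qed.

Lemma ln_lower (x : R) : 0 <= x -> x - x ^+ 2 / 2 <= ln (1 + x).
Proof.
move=> x0.
pose h := fun y : R => ln y - y + (y - 1) ^+ 2 / 2.
have := @mono_deriv h (fun z => z^-1 - 1 + (z - 1)) 1 (1 + x) ltr01.
rewrite lerDl => /(_ x0).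
have H1 : forall z : R, 0 < z -> is_derive z 1 h (z^-1 - 1 + (z - 1)).
  move=> z z0; have := is_derive1_ln z0 => H.
  apply: trigger_derive; rewrite /GRing.scale /=.
  by field; rewrite gt_eqF.
move=> /(_ H1).
have H2 : forall z : R, 1 < z < 1 + x -> 0 <= z^-1 - 1 + (z - 1).
  move=> z /andP[z1 _].
  have z0 : 0 < z by exact: lt_trans ltr01 z1.
  have -> : z^-1 - 1 + (z - 1) = (z - 1) ^+ 2 / z.
    by field; rewrite gt_eqF.
  by apply: divr_ge0; [exact: sqr_ge0 | exact: ltW].
move=> /(_ H2); rewrite /h ln1 subrr expr0n /= mul0r !addr0.
move=> H; lra.
Qed.

Lemma ln_upper (x : R) : 0 <= x -> ln (1 + x) <= x - x ^+ 2 / 2 + x ^+ 3 / 3.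
Proof.
move=> x0.
pose h := fun y : R => - ln y + y - (y - 1) ^+ 2 / 2 + (y - 1) ^+ 3 / 3.
have H1 : forall z : R, 0 < z -> is_derive z 1 h (- z^-1 + 1 - (z - 1) + (z - 1) ^+ 2).
  move=> z z0; have := is_derive1_ln z0 => H.
  apply: trigger_derive; rewrite /GRing.scale /=.
  by field; rewrite gt_eqF.
have H2 : forall z : R, 1 < z < 1 + x -> 0 <= - z^-1 + 1 - (z - 1) + (z - 1) ^+ 2.
  move=> z /andP[z1 _].
  have z0 : 0 < z by exact: lt_trans ltr01 z1.
  have -> : - z^-1 + 1 - (z - 1) + (z - 1) ^+ 2 = (z - 1) ^+ 3 / z.
    by field; rewrite gt_eqF.
  by apply: divr_ge0; [apply: exprn_ge0; lra | exact: ltW].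
have := @mono_deriv h (fun z => - z^-1 + 1 - (z - 1) + (z - 1) ^+ 2) 1 (1 + x) ltr01.
rewrite lerDl => /(_ x0 H1 H2).
rewrite /h ln1 subrr expr0n /= mul0r oppr0 !addr0 add0r expr0n /= mul0r addr0.
have -> : 1 + x - 1 = x by ring.
move=> H; lra.
Qed.


Definition sst (n : nat) : R := ln (n`!)%:R - (n%:R + 2^-1) * ln n%:R + n%:R.

Lemma sst1 : sst 1 = 1.
Proof. by rewrite /sst /= ln1 mulr0 subr0 add0r. Qed.

Lemma sst_step n : (0 < n)%N -> sst n - sst n.+1 = (n%:R + 2^-1) * ln (1 + n%:R^-1) - 1.
Proof.
move=> n0.
have n0' : (0 : R) < n%:R by rewrite ltr0n.
have hf : (0 : R) < (n`!)%:R by rewrite ltr0n fact_gt0.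
have -> : 1 + n%:R^-1 = n.+1%:R / n%:R :> R by rewrite -addn1 natrD; field; rewrite gt_eqF.
rewrite ln_div ?posrE ?ltr0n //.
rewrite /sst factS natrM lnM ?posrE ?ltr0n ?fact_gt0 //.
rewrite -addn1 natrD; ring.
Qed.

Lemma d_bounds n : (0 < n)%N ->
  - (2^-1 / n%:R - 2^-1 / n.+1%:R) <= sst n - sst n.+1 <= 2^-1 / n%:R - 2^-1 / n.+1%:R.
Proof.
move=> n0; rewrite sst_step //.
have n1 : (1 : R) <= n%:R by rewrite ler1n.
set x : R := n%:R^-1.
have x0 : 0 < x by rewrite invr_gt0; lra.
have x1 : x <= 1 by rewrite invf_le1 //; lra.
have nx : n%:R = x^-1 by rewrite invrK.
have n1x : n.+1%:R = (1 + x) / x by rewrite -addn1 natrD nx; field; rewrite gt_eqF.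
have e3 : 2^-1 * x - 2^-1 / n.+1%:R = x ^+ 2 / (2 * (1 + x)).
  rewrite n1x; field; apply/andP; split; rewrite gt_eqF //; lra.
rewrite e3 nx.
have hlo := @ln_lower x (ltW x0).
have hup := @ln_upper x (ltW x0).
set L := ln (1 + x) in hlo hup *.
have cpos : 0 < x^-1 + 2^-1 by rewrite ltr_wpDr // ?invr_gt0 //; lra.
have e1 : (x^-1 + 2^-1) * (x - x ^+ 2 / 2) - 1 = - x ^+ 2 / 4 by field; rewrite gt_eqF.
have e2 : (x^-1 + 2^-1) * (x - x ^+ 2 / 2 + x ^+ 3 / 3) - 1 = x ^+ 2 / 12 + x ^+ 3 / 6 by field; rewrite gt_eqF.
have l1 := ler_wpM2l (ltW cpos) hlo.
have l2 := ler_wpM2l (ltW cpos) hup.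
have b1 : x ^+ 2 / 4 <= x ^+ 2 / (2 * (1 + x)).
  rewrite ler_pdivlMr; last lra.
  rewrite mulrAC ler_pdivrMr; last lra.
  rewrite ler_wpM2l ?sqr_ge0 //; lra.
have b2 : x ^+ 2 / 12 + x ^+ 3 / 6 <= x ^+ 2 / 4.
  have : x ^+ 3 <= x ^+ 2 by rewrite exprS -[X in _ <= X]mul1r ler_wpM2r ?sqr_ge0.
  move=> ?; lra.
apply/andP; split; lra.
Qed.

Lemma sst_bounds n : (0 < n)%N -> 2^-1 <= sst n <= 3 / 2.
Proof.
move=> n0.
suff : 2^-1 + 2^-1 / n%:R <= sst n <= 3 / 2 - 2^-1 / n%:R.
  have : 0 <= 2^-1 / n%:R :> R by rewrite divr_ge0 // ?ler0n //; lra.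
  move=> h1 /andP[h2 h3]; apply/andP; split; lra.
elim: n n0 => [//|n IH] _.
case: n IH => [|n] IH.
  rewrite sst1 divr1; apply/andP; split; lra.
have /andP[a b] := IH isT.
have /andP[c d] := @d_bounds n.+1 isT.
move: a b c d; move: (2^-1 / n.+1%:R : R) (2^-1 / n.+2%:R : R) (sst n.+1) (sst n.+2) => u v s1 s2 *; apply/andP; split; lra.
Qed.


Lemma lnfact n : ln (n`!)%:R = sst n + (n%:R + 2^-1) * ln n%:R - n%:R :> R.
Proof. rewrite /sst; ring. Qed.

Definition Gap (N k : nat) : R :=
  N%:R * ln N%:R - k%:R * ln k%:R - (N - k)%:R * ln (N - k)%:R - ln ('C(N, k))%:R.

Lemma Gap_eq N k : (k <= N)%N ->
  Gap N k = sst k + sst (N - k) - sst N + 2^-1 * (ln k%:R + ln (N - k)%:R - ln N%:R).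
Proof.
move=> kN.
have h := bin_fact kN.
have hC : (0 < 'C(N, k))%N by rewrite bin_gt0.
have e : ln ('C(N, k))%:R = ln (N`!)%:R - ln (k`!)%:R - ln ((N - k)`!)%:R :> R.
  have p1 : (0:R) < ('C(N,k))%:R by rewrite ltr0n.
  have p2 : (0:R) < (k`!)%:R by rewrite ltr0n fact_gt0.
  have p3 : (0:R) < ((N-k)`!)%:R by rewrite ltr0n fact_gt0.
  rewrite -h natrM natrM.
  rewrite lnM ?posrE ?mulr_gt0 //.
  rewrite lnM ?posrE //; lra.
rewrite /Gap e !lnfact.
have hd : (N - k)%:R = N%:R - k%:R :> R by rewrite natrB.
rewrite hd.
move: (ln (N%:R - k%:R) : R) (ln k%:R : R) (ln N%:R : R) (sst N) (sst k) (sst (N - k)) (N%:R : R) (k%:R : R) => l1 l2 l3 s1 s2 s3 n1 k1.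
ring.
Qed.
Lemma Gap_bounds N k : (0 < k)%N -> (k < N)%N ->
  - 2^-1 + 2^-1 * (ln k%:R + ln (N - k)%:R - ln N%:R) <= Gap N k
  <= 5 / 2 + 2^-1 * (ln k%:R + ln (N - k)%:R - ln N%:R).
Proof.
move=> k0 kN.
rewrite Gap_eq; last exact: ltnW.
have /andP[a1 a2] := @sst_bounds k k0.
have kN' : (0 < N - k)%N by rewrite subn_gt0.
have /andP[b1 b2] := @sst_bounds (N - k) kN'.
have /andP[c1 c2] := @sst_bounds N (ltn_trans k0 kN).
move: a1 a2 b1 b2 c1 c2.
move: (sst k) (sst (N - k)) (sst N) (2^-1 * (ln k%:R + ln (N - k)%:R - ln N%:R) : R) => a b c l *.
apply/andP; split; lra.
Qed.


Lemma gap_final (N k : nat) (eta K : R) : (0 < k)%N -> (k < N)%N -> 0 < eta ->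
  5 + `|K| / eta <= ln N%:R ->
  K = 1 - 2^-1 * (ln (k%:R / N%:R) + ln ((N - k)%:R / N%:R)) ->
  (2^-1 - eta) * ln N.+1%:R <= Gap N k <= ln N.+1%:R.
Proof.
move=> k0 kN eta0 hN hK.
have N0 : (0 < N)%N by exact: ltn_trans kN.
have kr : (0:R) < k%:R by rewrite ltr0n.
have Nr : (0:R) < N%:R by rewrite ltr0n.
have Nkr : (0:R) < (N - k)%:R by rewrite ltr0n subn_gt0.
have e1 : ln (k%:R / N%:R) = ln k%:R - ln N%:R :> R by rewrite ln_div ?posrE.
have e2 : ln ((N - k)%:R / N%:R) = ln (N - k)%:R - ln N%:R :> R by rewrite ln_div ?posrE.
have hk : ln k%:R <= ln N%:R :> R by rewrite ler_ln ?posrE // ler_nat ltnW.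
have hNk : ln (N - k)%:R <= ln N%:R :> R by rewrite ler_ln ?posrE // ler_nat leq_subr.
have hN1 : ln N%:R <= ln N.+1%:R :> R by rewrite ler_ln ?posrE ?ltr0n // ler_nat.
have l2 : ln 2 <= 1 :> R.
  have : ln (1 + 1) <= 1 :> R by apply: le_ln1Dx; lra.
  by rewrite (_ : (1:R) + 1 = 2) //; lra.
have hN2 : ln N.+1%:R <= ln 2 + ln N%:R :> R.
  rewrite -lnM ?posrE // ler_ln ?posrE ?mulr_gt0 ?ltr0n //.
  by rewrite -natrM ler_nat mul2n -addnn -addn1 leq_add2l.
have hKe : `|K| <= eta * ln N.+1%:R.
  rewrite mulrC -ler_pdivrMr //.
  have : 0 <= `|K| / eta by rewrite divr_ge0 // ltW.
  move=> ?; lra.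
have hKK : K <= `|K| by exact: ler_norm.
have /andP[g1 g2] := @Gap_bounds N k k0 kN.
have hq : 0 <= `|K| / eta by rewrite divr_ge0 // ltW.
have hKK' : 1 - 2^-1 * (ln k%:R - ln N%:R + (ln (N - k)%:R - ln N%:R)) <= `|K| by rewrite -e1 -e2 -hK.
clear hKK.
rewrite mulrBl.
move: g1 g2 hKe hKK' hq hN hN1 hN2 l2 hk hNk.
move: (Gap N k) (ln k%:R : R) (ln (N - k)%:R : R) (ln N%:R : R) (ln N.+1%:R : R) (eta * ln N.+1%:R) `|K| (`|K| / eta) (ln 2 : R) => G a b c d ed aK q l *.
apply/andP; split; lra.
Qed.



Definition cnt {L : finType} (phi : config L) : nat := #|[set x | phi x]|.

Lemma magn_cnt (L : finType) (phi : config L) :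
  magn L phi = 2 * (cnt phi)%:R - #|L|%:R :> R.
Proof.
rewrite /magn.
have hs : forall b : bool, spin b = 2 * (b : nat)%:R - 1 :> R.
  by case; rewrite /spin /=; ring.
under eq_bigr do rewrite hs.
rewrite sumrB -mulr_sumr.
congr (2 * _ - _).
  rewrite /cnt -sum1_card natr_sum [RHS]big_mkcond /=.
  by apply: eq_bigr => x _; rewrite inE; case: (phi x).
rewrite sumr_const; congr (_%:R); exact: eq_card.
Qed.

Lemma card_cnt (L : finType) k : #|[set phi : config L | cnt phi == k]| = 'C(#|L|, k).
Proof.
rewrite -card_draws.
pose f := fun A : {set L} => [ffun x => x \in A] : config L.
have finj : injective f.
  move=> A B /ffunP h; apply/setP => x; have := h x; by rewrite !ffunE.
suff -> : [set phi : config L | cnt phi == k] = f @: [set A : {set L} | #|A| == k].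
  by rewrite (card_imset _ finj).
apply/setP => phi; rewrite !inE.
apply/idP/imsetP.
  move=> hc; exists [set x | phi x]; first by rewrite inE.
  by apply/ffunP => x; rewrite ffunE inE.
move=> [A]; rewrite inE => hA ->.
rewrite /cnt; rewrite (_ : [set x | f A x] = A) //.
by apply/setP => x; rewrite inE ffunE.
Qed.

Lemma sumZ (L : finType) (mu : R) :
  \sum_(psi : config L) expR (- mu * magn L psi) = (expR mu + expR (- mu)) ^+ #|L|.
Proof.
have h : forall psi : config L, expR (- mu * magn L psi) = \prod_x expR (- mu * spin (psi x)).
  by move=> psi; rewrite /magn mulr_sumr expR_sum.
rewrite (eq_bigr _ (fun psi _ => h psi)).
rewrite -(bigA_distr_bigA (fun (x : L) (b : bool) => expR (- mu * spin b))) /=.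
rewrite (eq_bigr (fun _ => expR mu + expR (- mu))).
  by rewrite prodr_const.
by move=> x _; rewrite big_bool /spin /= mulr1 mulrN1 opprK addrC.
Qed.


Lemma mN_eq (L : finType) (phi psi : config L) : (0 < #|L|)%N ->
  (mN L phi == mN L psi :> R) = (cnt phi == cnt psi).
Proof.
move=> N0.
have N0' : (#|L|%:R : R) != 0 by rewrite pnatr_eq0 -lt0n.
rewrite /mN !magn_cnt.
apply/eqP/eqP => h; last by rewrite h.
have h1 := mulIf (invr_neq0 N0') h.
have : (cnt phi)%:R = (cnt psi)%:R :> R.
  move: h1; move: ((cnt phi)%:R : R) ((cnt psi)%:R : R) => a b ?; lra.
by move/eqP; rewrite eqr_nat => /eqP.
Qed.

Lemma magn_mN (L : finType) (phi : config L) : (0 < #|L|)%N ->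
  magn L phi = mN L phi * #|L|%:R :> R.
Proof.
move=> N0; rewrite /mN divfK // pnatr_eq0 -lt0n //.
Qed.

Lemma Z_gt0 (L : finType) (mu : R) : 0 < \sum_(psi : config L) expR (- mu * magn L psi).
Proof. by rewrite sumZ exprn_gt0 // addr_gt0 // expR_gt0. Qed.

Lemma relent_eq (L : finType) (m mu : R) (phi0 : config L) : (0 < #|L|)%N -> mN L phi0 = m ->
  relent (config L) (muMC L m) (muC L mu) =
  (#|L|%:R * ln (expR mu + expR (- mu)) - ln ('C(#|L|, cnt phi0))%:R + mu * m * #|L|%:R)%:E.
Proof.
move=> N0 hm.
set Z := \sum_(psi : config L) expR (- mu * magn L psi).
have Z0 : 0 < Z by exact: Z_gt0.
have hS : [set phi : config L | mN L phi == m] = [set phi : config L | cnt phi == cnt phi0].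
  by apply/setP => phi; rewrite !inE -hm mN_eq.
set C := 'C(#|L|, cnt phi0).
have hC : #|[set phi : config L | mN L phi == m]| = C by rewrite hS card_cnt.
have C0 : (0 < C)%N by rewrite bin_gt0 /cnt max_card.
have C0' : (0 : R) < C%:R by rewrite ltr0n.
have muC_pos : forall phi, 0 < muC L mu phi.
  by move=> phi; rewrite /muC divr_gt0 // expR_gt0.
rewrite /relent.
have -> : [forall x, (muC L mu x == 0) ==> (muMC L m x == 0)].
  apply/forallP => x; apply/implyP; by rewrite gt_eqF.
congr (_%:E).
have hsupp : forall phi, (muMC L m phi != 0) = (mN L phi == m).
  move=> phi; rewrite /muMC hC; case: ifP => _; last by rewrite eqxx.
  by rewrite invr_eq0 gt_eqF.
rewrite (eq_bigl (fun phi => phi \in [set phi : config L | mN L phi == m])); last first.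
  by move=> phi; rewrite inE hsupp.
set c := (C%:R^-1 * ln (C%:R^-1 / (expR (- mu * (m * #|L|%:R)) / Z))).
rewrite (eq_bigr (fun _ => c)); last first.
  move=> phi; rewrite inE => /eqP hphi.
  by rewrite /c /muMC /muC hC hphi eqxx magn_mN // hphi.
rewrite sumr_const hC /c -[LHS]mulr_natl mulrA mulfV ?gt_eqF // mul1r.
rewrite ln_div ?posrE ?invr_gt0 ?divr_gt0 ?expR_gt0 //.
rewrite ln_div ?posrE ?expR_gt0 //.
rewrite lnV ?posrE // expRK /Z sumZ lnXn ?addr_gt0 ?expR_gt0 //.
rewrite -(mulr_natl (ln (expR mu + expR (-mu)))) .
move: (ln (expR mu + expR (-mu)) : R) (ln C%:R : R) (#|L|%:R : R) => a b n.
ring.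
Qed.


Lemma m_range (L : finType) (m : R) : inRan L m -> -1 <= m <= 1.
Proof.
case=> phi <-.
case: (posnP #|L|) => [N0|N0].
  rewrite /mN N0 invr0 mulr0; apply/andP; split; lra.
have Nr : (0:R) < #|L|%:R by rewrite ltr0n.
have hc : (cnt phi <= #|L|)%N by exact: max_card.
have hc' : (cnt phi)%:R <= #|L|%:R :> R by rewrite ler_nat.
have hc0 : (0:R) <= (cnt phi)%:R by exact: ler0n.
rewrite /mN magn_cnt ler_pdivlMr // ler_pdivrMr //.
move: hc' hc0 Nr; move: ((cnt phi)%:R : R) (#|L|%:R : R) => c n *.
apply/andP; split; lra.
Qed.

Lemma ln_lt (t : R) : -1 < t -> t != 0 -> ln (1 + t) < t.
Proof.
move=> t1 t0.
rewrite -[X in _ < X]expRK ltr_ln ?posrE ?expR_gt0 //; last lra.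
exact: expR_gt1Dx.
Qed.

Lemma KL_le (x y : R) : 0 < x -> 0 < y -> x - y <= x * ln (x / y).
Proof.
move=> x0 y0.
have e : ln (x / y) = - ln (1 + (y / x - 1)).
  by rewrite addrC subrK -lnV ?posrE ?divr_gt0 // invf_div.
have h : ln (1 + (y / x - 1)) <= y / x - 1.
  apply: le_ln1Dx; have : 0 < y / x by rewrite divr_gt0.
  move=> ?; lra.
rewrite e mulrN.
have h2 := ler_wpM2l (ltW x0) h.
have e2 : x * (y / x - 1) = y - x by field; rewrite gt_eqF.
rewrite e2 in h2; lra.
Qed.

Lemma KL_lt (x y : R) : 0 < x -> 0 < y -> x != y -> x - y < x * ln (x / y).
Proof.
move=> x0 y0 xy.
have e : ln (x / y) = - ln (1 + (y / x - 1)).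
  by rewrite addrC subrK -lnV ?posrE ?divr_gt0 // invf_div.
have yx0 : 0 < y / x by rewrite divr_gt0.
have h : ln (1 + (y / x - 1)) < y / x - 1.
  apply: ln_lt; first lra.
  rewrite subr_eq0; apply: contra xy => /eqP h.
  have xn0 : x != 0 by rewrite gt_eqF.
  have : y = x by rewrite -[y](divfK xn0) h mul1r.
  by move=> ->.
rewrite e mulrN.
have h2 : x * ln (1 + (y / x - 1)) < x * (y / x - 1) by rewrite ltr_pM2l.
have e2 : x * (y / x - 1) = y - x by field; rewrite gt_eqF.
rewrite e2 in h2; lra.
Qed.


Lemma Fmmu_KL (m mu : R) : -1 < m < 1 ->
  Fmmu m mu = (1 + m) / 2 * ln ((1 + m) / 2 / (expR (- mu) / (expR mu + expR (- mu))))
            + (1 - m) / 2 * ln ((1 - m) / 2 / (expR mu / (expR mu + expR (- mu)))).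
Proof.
move=> /andP[m1 m2].
have S0 : 0 < expR mu + expR (- mu) by rewrite addr_gt0 ?expR_gt0.
have p0 : 0 < (1 + m) / 2 by rewrite divr_gt0 //; lra.
have q0 : 0 < (1 - m) / 2 by rewrite divr_gt0 //; lra.
rewrite /Fmmu /cosh.
rewrite !ln_div ?posrE ?divr_gt0 ?expR_gt0 //; try lra.
rewrite !expRK.
move: (ln (expR mu + expR (- mu)) : R) (ln 2 : R) (ln (1 + m) : R) (ln (1 - m) : R) => s l a b.
by field.
Qed.

Lemma part2 (m mu : R) : -1 < m < 1 -> (Fmmu m mu = 0 <-> m = - tanh mu).
Proof.
move=> hm; have /andP[m1 m2] := hm.
set E := expR mu; set E' := expR (- mu).
have E0 : 0 < E by exact: expR_gt0.
have E0' : 0 < E' by exact: expR_gt0.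
have S0 : 0 < E + E' by rewrite addr_gt0.
have ht : - tanh mu = (E' - E) / (E + E').
  rewrite /tanh /sinh /cosh -/E -/E'; field.
  by rewrite gt_eqF.
have p0 : 0 < (1 + m) / 2 by rewrite divr_gt0 //; lra.
have q0 : 0 < (1 - m) / 2 by rewrite divr_gt0 //; lra.
have a0 : 0 < E' / (E + E') by rewrite divr_gt0.
have b0 : 0 < E / (E + E') by rewrite divr_gt0.
rewrite (@Fmmu_KL m mu hm) -/E -/E' ht.
split => [hF | ->].
  have [hpa | hpa] := eqVneq ((1 + m) / 2) (E' / (E + E')).
    have : m = 2 * (E' / (E + E')) - 1 by rewrite -hpa; field.
    move=> ->; field; by rewrite gt_eqF.
  have h1 := @KL_lt _ _ p0 a0 hpa.
  have h2 := @KL_le _ _ q0 b0.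
  have hs : E' / (E + E') + E / (E + E') = 1 by field; rewrite gt_eqF.
  move: h1 h2 hF hs.
  move: ((1 + m) / 2 * ln ((1 + m) / 2 / (E' / (E + E')))) ((1 - m) / 2 * ln ((1 - m) / 2 / (E / (E + E')))) (E' / (E + E')) (E / (E + E')) => u v a b *.
  exfalso; lra.
have -> : (1 + (E' - E) / (E + E')) / 2 / (E' / (E + E')) = 1.
  by field; apply/andP; split; rewrite gt_eqF.
have -> : (1 - (E' - E) / (E + E')) / 2 / (E / (E + E')) = 1.
  by field; apply/andP; split; rewrite gt_eqF.
by rewrite ln1 !mulr0 addr0.
Qed.

End S.

Theorem proposition3p6 (R : realType) :
  (forall m : R, m != -1 -> m != 1 ->
   forall eta : R, 0 < eta ->
   exists N0 : nat, forall L : finType, (N0 <= #|L|)%N -> inRan L m ->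
   forall mu : R,
     (((2^-1 - eta) * (ln (#|L|.+1%:R : R) / #|L|%:R))%:E
        <= ((#|L|%:R : R)^-1)%:E * relent (config L) (muMC L m) (muC L mu) - (Fmmu m mu)%:E)%E
     /\
     (((#|L|%:R : R)^-1)%:E * relent (config L) (muMC L m) (muC L mu) - (Fmmu m mu)%:E
        <= (ln (#|L|.+1%:R : R) / #|L|%:R)%:E)%E)
  /\
  (forall (L : finType) (m mu : R), inRan L m -> m != -1 -> m != 1 ->
     (Fmmu m mu = 0 <-> m = - tanh mu)).
Proof.
split; last first.
  move=> L m mu hR m1 m2; apply: part2.
  have /andP[a b] := @m_range R L m hR.
  by rewrite !lt_neqAle a b eq_sym m1 m2.
move=> m m1 m2 eta eta0.
pose K := 1 - 2^-1 * (ln ((1 + m) / 2) + ln ((1 - m) / 2)) : R.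
exists (Num.truncn (expR (5 + `|K| / eta))).+1.
move=> L hN [phi0 hphi0] mu.
have N0 : (0 < #|L|)%N by exact: leq_trans (ltn0Sn _) hN.
have Nr : (0:R) < #|L|%:R by rewrite ltr0n.
have hlnN : 5 + `|K| / eta <= ln #|L|%:R.
  have h := truncnS_gt (expR (5 + `|K| / eta)).
  have h2 : expR (5 + `|K| / eta) <= #|L|%:R.
    by apply: (le_trans (ltW h)); rewrite ler_nat.
  by rewrite -ler_ln ?posrE ?expR_gt0 // expRK in h2.
pose k := cnt phi0.
have hm : m = (2 * k%:R - #|L|%:R) / #|L|%:R by rewrite -hphi0 /mN magn_cnt.
have k0 : (0 < k)%N.
  rewrite lt0n; apply/negP => /eqP k0; move: m1; rewrite hm k0 mulr0.
  have -> : (0 - #|L|%:R) / #|L|%:R = -1 :> R by field; rewrite gt_eqF.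
  by rewrite eqxx.
have kN : (k < #|L|)%N.
  rewrite ltn_neqAle max_card andbT; apply/negP => /eqP kN; move: m2.
  rewrite hm kN.
  have -> : (2 * #|L|%:R - #|L|%:R) / #|L|%:R = 1 :> R by field; rewrite gt_eqF.
  by rewrite eqxx.
have kr : (0:R) < k%:R by rewrite ltr0n.
have hp : (1 + m) / 2 = k%:R / #|L|%:R by rewrite hm; field; rewrite gt_eqF.
have hq : (1 - m) / 2 = (#|L| - k)%:R / #|L|%:R.
  rewrite hm natrB; last exact: ltnW.
  by field; rewrite gt_eqF.
have hK : K = 1 - 2^-1 * (ln (k%:R / #|L|%:R) + ln ((#|L| - k)%:R / #|L|%:R)).
  by rewrite /K hp hq.
have /andP[g1 g2] := @gap_final R #|L| k eta K k0 kN eta0 hlnN hK.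
rewrite (@relent_eq R L m mu phi0 N0 hphi0) -/k.
have hid : (#|L|%:R)^-1 * (#|L|%:R * ln (expR mu + expR (- mu)) - ln ('C(#|L|, k))%:R
             + mu * m * #|L|%:R) - Fmmu m mu = Gap R #|L| k / #|L|%:R.
  rewrite /Fmmu /cosh hp hq /Gap.
  have Nk : (0:R) < (#|L| - k)%:R by rewrite ltr0n subn_gt0.
  rewrite !ln_div ?posrE ?addr_gt0 ?expR_gt0 //.
  rewrite natrB; last exact: ltnW.
  have nz : (#|L|%:R : R) != 0 by rewrite gt_eqF.
  move: nz.
  move: (ln (expR mu + expR (- mu)) : R) (ln ('C(#|L|, k))%:R : R) (ln 2 : R) (ln k%:R : R) (ln #|L|%:R : R) (ln (#|L|%:R - k%:R) : R) (#|L|%:R : R) (k%:R : R) => a b c d e f n kk nz.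
  by field.
rewrite -EFinM -EFinB !lee_fin hid.
move: g1 g2; rewrite !(mulrA (2^-1 - eta)).
move=> g1 g2; split.
  by rewrite ler_pM2r ?invr_gt0.
by rewrite ler_pM2r ?invr_gt0.
Qed.
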